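(* Let $t(z),d(z)\in\mathbb{C}[[z]]$ be such that $t^2-4d$ has a simple zero at $z=0$, and let $A_0(z)\in\mathfrak{gl}_2(\mathbb{C}[[z]])$ satisfy $\operatorname{tr}A_0=t$, $\det A_0=d$. Then (1) $A_0(z)$ is a regular element of $\mathfrak{gl}_2(\mathbb{C}[[z]])$; (2) if $B(z)\in\mathfrak{gl}_2(\mathbb{C}((z)))$ satisfies $[B,A_0]=0$ and $\frac{dB}{dz}\in\mathfrak{gl}_2(\mathbb{C}[[z]])+[A_0,\mathfrak{gl}_2(\mathbb{C}((z)))]$, then $B(z)\in\mathfrak{gl}_2(\mathbb{C}[[z]])$. *)

(* Defs.v *)
From HB Require Import structures.
From mathcomp Require Import all_boot all_order all_algebra.
From mathcomp Require Import reals.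
From mathcomp Require Import complex.
Set Implicit Arguments. Unset Strict Implicit. Unset Printing Implicit Defensive.
Import Order.TTheory GRing.Theory Num.Theory.
Local Open Scope ring_scope.

Section Series.
Variable C : comNzRingType.

Definition pser := nat -> C.
(* an element of gl_2(C[[z]]) : sequence of 2x2 coefficient matrices,
   A(z) = \sum_k A k z^k *)
Definition mpser := nat -> 'M[C]_2.

Definition smul (f g : pser) : pser :=
  fun k => \sum_(i < k.+1) f i * g (k - i)%N.

Definition mentry (A : mpser) (i j : 'I_2) : pser := fun k => A k i j.
Definition mtrace (A : mpser) : pser := fun k => \tr (A k).
Definition mdet (A : mpser) : pser :=
  fun k => smul (mentry A ord0 ord0) (mentry A ord_max ord_max) k
         - smul (mentry A ord0 ord_max) (mentry A ord_max ord0) k.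

(* an element of gl_2(C((z))) : z^{-lval} * \sum_k lcoef k z^k *)
Record mlaur := MLaur { lval : nat; lcoef : nat -> 'M[C]_2 }.

Definition lcoeff (B : mlaur) (n : int) : 'M[C]_2 :=
  if (0 <= n + (lval B)%:Z)%R then lcoef B (absz (n + (lval B)%:Z)) else 0.

Definition leq_ (B1 B2 : mlaur) : Prop := forall n : int, lcoeff B1 n = lcoeff B2 n.

Definition of_mpser (A : mpser) : mlaur := MLaur 0 A.
Definition is_mpser (B : mlaur) : Prop := forall n : int, (n < 0)%R -> lcoeff B n = 0.

Definition laddm (B1 B2 : mlaur) : mlaur :=
  MLaur (lval B1 + lval B2)
        (fun k => lcoeff B1 (k%:Z - (lval B1 + lval B2)%:Z)
                + lcoeff B2 (k%:Z - (lval B1 + lval B2)%:Z)).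

Definition lbrl (A : mpser) (X : mlaur) : mlaur :=
  MLaur (lval X) (fun k => \sum_(i < k.+1)
          (A i *m lcoef X (k - i)%N - lcoef X (k - i)%N *m A i)).

Definition lbrr (B : mlaur) (A : mpser) : mlaur :=
  MLaur (lval B) (fun k => \sum_(i < k.+1)
          (lcoef B (k - i)%N *m A i - A i *m lcoef B (k - i)%N)).

(* d/dz on gl_2(C((z))) : coefficient of z^n in dB/dz is (n+1) B_{n+1} *)
Definition lderiv (B : mlaur) : mlaur :=
  MLaur (lval B).+1 (fun k => lcoef B k *~ (k%:Z - (lval B)%:Z)).

End Series.

Definition regular_mx (F : fieldType) (M : 'M[F]_2) : Prop :=
  mxminpoly M = char_poly M.

Definition regular_mpser (F : fieldType) (A : mpser F) : Prop :=
  regular_mx (A 0%N).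

(* Main.v *)
Require Import Defs.
From HB Require Import structures.
From mathcomp Require Import all_boot all_order all_algebra.
From mathcomp Require Import reals.
From mathcomp Require Import complex.
From mathcomp Require Import zify ring lra.
Import Order.TTheory GRing.Theory Num.Theory.
Local Open Scope ring_scope.

Section Mx2.
Variable F : fieldType.
Implicit Types M N Y : 'M[F]_2.

Lemma ord2_cases (i : 'I_2) : i = ord0 \/ i = ord_max.
Proof. case: i => [[|[|k]] Hk]; [left|right|by []]; exact/val_inj. Qed.

Lemma mx2P M N :
  M ord0 ord0 = N ord0 ord0 -> M ord0 ord_max = N ord0 ord_max ->
  M ord_max ord0 = N ord_max ord0 -> M ord_max ord_max = N ord_max ord_max ->
  M = N.
Proof.
move=> h1 h2 h3 h4; apply/matrixP => i j.
by case: (ord2_cases i) => ->; case: (ord2_cases j) => ->.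
Qed.

Lemma mul2E M N i j : (M *m N) i j = M i ord0 * N ord0 j + M i ord_max * N ord_max j.
Proof.
rewrite !mxE !big_ord_recr big_ord0 /= add0r.
by have -> : widen_ord (leqnSn 1) ord_max = ord0 :> 'I_2 by apply/val_inj.
Qed.

Lemma tr2E M : \tr M = M ord0 ord0 + M ord_max ord_max.
Proof.
rewrite /mxtrace !big_ord_recr big_ord0 /= add0r.
by have -> : widen_ord (leqnSn 1) ord_max = ord0 :> 'I_2 by apply/val_inj.
Qed.

Lemma regular2 M : ~~ is_scalar_mx M -> mxminpoly M = char_poly M.
Proof.
move=> Hns.
have hd : degree_mxminpoly M = 2%N.
  have := mxminpoly_linear_is_scalar M; rewrite (negbTE Hns).
  have := size_mxminpoly M; have := mxminpoly_dvd_char M.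
  move=> hdv hs hle.
  have /dvdp_leq : char_poly M != 0 by rewrite -size_poly_eq0 size_char_poly.
  move=> /(_ _ hdv); rewrite hs size_char_poly; lia.
apply/eqP; rewrite -eqp_monic ?mxminpoly_monic ?char_poly_monic //.
by rewrite -dvdp_size_eqp ?mxminpoly_dvd_char // size_mxminpoly hd size_char_poly.
Qed.

End Mx2.


Section Mx2.
Variable F : fieldType.
Implicit Types M N Y : 'M[F]_2.

Lemma lincomb (x y u v k : F) : x - y = k * (u - v) -> u = v -> x = y.
Proof. by move=> h e; apply/eqP; rewrite -subr_eq0 h e subrr mulr0. Qed.

Lemma cent_scal (n00 n01 n10 n11 y00 y01 y10 y11 : F) :
  y00 * n00 + y01 * n10 = n00 * y00 + n01 * y10 ->
  y00 * n01 + y01 * n11 = n00 * y01 + n01 * y11 ->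
  y10 * n00 + y11 * n10 = n10 * y00 + n11 * y10 ->
  n00 * n00 + n01 * n10 = 0 -> n10 * n01 + n11 * n11 = 0 ->
  [|| n00 != 0, n01 != 0, n10 != 0 | n11 != 0] ->
  exists a b, [/\ y00 = a + b * n00, y01 = b * n01, y10 = b * n10 & y11 = a + b * n11].
Proof.
move=> E00 E01 E10 G00 G11 Hnz.
case: (eqVneq n01 0) => h01.
- case: (eqVneq n10 0) => h10.
  + exfalso; move: Hnz.
    have h0 : n00 = 0.
      have : n00 * n00 = 0 by rewrite -G00 h01 mul0r addr0.
      by move/eqP; rewrite mulf_eq0 orbb => /eqP.
    have h1 : n11 = 0.
      have : n11 * n11 = 0 by rewrite -G11 h10 mul0r add0r.
      by move/eqP; rewrite mulf_eq0 orbb => /eqP.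
    by rewrite h0 h1 h01 h10 eqxx.
  + exists (y00 - y10 / n10 * n00), (y10 / n10); split.
    * field. exact h10.
    * apply: (mulIf h10). rewrite h01 mulr0 mul0r. subst n01. apply: (@lincomb _ _ _ _ 1 _ E00). ring.
    * field. exact h10.
    * apply: (mulIf h10). apply: (@lincomb _ _ _ _ 1 _ E10). field. exact h10.
- exists (y00 - y01 / n01 * n00), (y01 / n01); split.
    * field. exact h01.
    * field. exact h01.
    * apply: (mulIf h01). apply: (@lincomb _ _ _ _ (-1) _ E00). field. exact h01.
    * apply: (mulIf h01). apply: (@lincomb _ _ _ _ (-1) _ E01). field. exact h01.
Qed.

Lemma central2 N Y : N != 0 -> N *m N = 0 -> Y *m N = N *m Y ->
  exists a b, Y = a%:M + b *: N.
Proof.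
move=> Hn0 Hnn Hc.
have E i j := congr1 (fun M => M i j) Hc.
have G i j := congr1 (fun M => M i j) Hnn.
have E00 := E ord0 ord0; have E01 := E ord0 ord_max; have E10 := E ord_max ord0.
have G00 := G ord0 ord0; have G11 := G ord_max ord_max.
rewrite !mul2E in E00 E01 E10; rewrite !mul2E !mxE in G00 G11.
have Hnz : [|| N ord0 ord0 != 0, N ord0 ord_max != 0, N ord_max ord0 != 0 | N ord_max ord_max != 0].
  case: (boolP [|| _, _, _ | _]) => //; rewrite !negb_or !negbK => /and4P [/eqP h1 /eqP h2 /eqP h3 /eqP h4].
  have hN : N = 0 by apply: mx2P; rewrite mxE.
  by rewrite hN eqxx in Hn0.
have [a [b [h1 h2 h3 h4]]] := cent_scal _ _ _ _ _ _ _ _ E00 E01 E10 G00 G11 Hnz.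
by exists a, b; apply: mx2P; rewrite !mxE /= ?mulr1n ?mulr0n ?add0r.
Qed.

Lemma trace_comm2 N Y : N != 0 -> N *m N = 0 -> \tr N = 0 -> Y *m N = N *m Y ->
  \tr (Y *m N) = 0.
Proof.
move=> Hn0 Hnn Ht Hc; have [a [b ->]] := central2 _ _ Hn0 Hnn Hc.
by rewrite mulmxDl mul_scalar_mx -scalemxAl Hnn scaler0 addr0 mxtraceZ Ht mulr0.
Qed.

End Mx2.


Lemma mx_lincomb (F : comRingType) (k : F) (U V M1 M2 : 'M[F]_2) :
  U = V -> (forall i j, M1 i j - M2 i j = k * (U i j - V i j)) -> M1 = M2.
Proof.
move=> e h; apply/matrixP => i j; apply/eqP; rewrite -subr_eq0 h e subrr mulr0 //.
Qed.

Lemma sum2E (V : zmodType) (f : 'I_2 -> V) : \sum_(j < 2) f j = f ord0 + f ord_max.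
Proof.
rewrite !big_ord_recr big_ord0 /= add0r.
by have -> : widen_ord (leqnSn 1) ord_max = ord0 :> 'I_2 by apply/val_inj.
Qed.

Arguments mx_lincomb {F} k {U V M1 M2}.

Lemma key (F : numFieldType) (A0 A1 b b1 N : 'M[F]_2) (s : F) :
  N = A0 *+ 2 - (\tr A0)%:M ->
  \tr (N *m A1) != 0 ->
  N *m N = 0 ->
  b *m A0 = A0 *m b ->
  b1 *m A0 - A0 *m b1 + (b *m A1 - A1 *m b) = 0 ->
  \tr b = 0 ->
  \tr b1 * (s + 1) = 0 ->
  \tr (b1 *m A0) * (s + 1) + \tr (b *m A1) * s = 0 ->
  s *+ 2 + 1 != 0 ->
  b = 0.
Proof.
move=> hNdef hT hNN hC0 hC1 htb htb1 hpair h2s.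
have hN0 : N != 0 by apply: contraNneq hT => ->; rewrite mul0mx mxtrace0.
have htrN : \tr N = 0 by rewrite hNdef !tr2E !mxE /=; ring.
have hbN : b *m N = N *m b.
  apply: (mx_lincomb 2 hC0) => i j.
  by case: (ord2_cases i) => ->; case: (ord2_cases j) => ->;
    rewrite hNdef !(mxE, sum2E, tr2E) /=; ring.
have [a [be hb]] := central2 _ _ _ hN0 hNN hbN.
have ha : a = 0.
  have : a *+ 2 = \tr b - be * \tr N by rewrite hb !tr2E !mxE /=; ring.
  rewrite htb htrN mulr0 subrr => /eqP; rewrite mulrn_eq0 /= => /eqP //.
pose Y := b1 - (be *+ 2) *: A1.
have hY : Y *m A0 = A0 *m Y.
  apply: (mx_lincomb 1 hC1) => i j.
  case: (ord2_cases i) => ->; case: (ord2_cases j) => ->;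
    rewrite /Y hb hNdef !(mxE, sum2E, tr2E) /=; ring.
have hYN : Y *m N = N *m Y.
  apply: (mx_lincomb 2 hY) => i j.
  by case: (ord2_cases i) => ->; case: (ord2_cases j) => ->;
    rewrite hNdef !(mxE, sum2E, tr2E) /=; ring.
have htY := trace_comm2 _ _ _ hN0 hNN htrN hYN.
have E : be * \tr (N *m A1) * (s *+ 2 + 1) * 2 =
   2 * (\tr (b1 *m A0) * (s + 1) + \tr (b *m A1) * s) - (s + 1) * \tr (Y *m N)
   - \tr A0 * (\tr b1 * (s + 1)).
  rewrite /Y hb ha hNdef !(mxE, sum2E, tr2E) /=; ring.
move: E; rewrite hpair htY htb1 !mulr0 !subr0 => /eqP.
rewrite !mulf_eq0 (negbTE hT) (negbTE h2s) pnatr_eq0 /= !orbF => /eqP hbe.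
by rewrite hb ha hbe scale0r addr0; apply/matrixP => i j; rewrite !mxE mul0rn.
Qed.


Section Ser.
Variable C : comNzRingType.
Implicit Types B : mlaur C.

Lemma lcoeffE B (n : int) : lcoeff B n =
  if (0 <= n + (lval B)%:Z) then lcoef B (absz (n + (lval B)%:Z)) else 0.
Proof. by []. Qed.

Lemma lcoeff_nat B (k : nat) : lcoeff B (k%:Z - (lval B)%:Z) = lcoef B k.
Proof.
rewrite lcoeffE; have -> : k%:Z - (lval B)%:Z + (lval B)%:Z = k%:Z by lia.
by have -> : (0 <= k%:Z) = true by lia.
Qed.

Lemma lcoeff_neg B (n : int) : n + (lval B)%:Z < 0 -> lcoeff B n = 0.
Proof. by rewrite lcoeffE => h; rewrite ifF //; lia. Qed.

Lemma lcoeff_cases B (n : int) :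
  (n + (lval B)%:Z < 0 /\ lcoeff B n = 0) \/
  exists k : nat, n = k%:Z - (lval B)%:Z /\ lcoeff B n = lcoef B k.
Proof.
case: (ltrP (n + (lval B)%:Z) 0) => h; first by left; split => //; apply: lcoeff_neg.
right; exists (absz (n + (lval B)%:Z)).
have e : n = (absz (n + (lval B)%:Z))%:Z - (lval B)%:Z by lia.
by split => //; rewrite {1}e lcoeff_nat.
Qed.

Lemma is_mpser_of B : (forall k : nat, (k < lval B)%N -> lcoef B k = 0) -> is_mpser B.
Proof.
move=> h n hn; case: (lcoeff_cases B n) => [[_ ->] //|[k [e ->]]].
by apply: h; lia.
Qed.

Lemma lcoeff_zero (n : int) : lcoeff (of_mpser (fun _ : nat => 0 : 'M[C]_2)) n = 0.
Proof. by rewrite lcoeffE; case: ifP. Qed.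

Lemma lcoeff_laddm B1 B2 n : lcoeff (laddm B1 B2) n = lcoeff B1 n + lcoeff B2 n.
Proof.
rewrite !lcoeffE /=; case: ifP => h.
  have -> : (absz (n + (lval B1 + lval B2)%N%:Z))%:Z - (lval B1 + lval B2)%N%:Z = n by lia.
  by [].
by rewrite !ifF ?addr0 //; apply/negbTE; lia.
Qed.

Lemma lcoeff_lderiv_nat B (k : nat) :
  lcoeff (lderiv B) (k%:Z - (lval B).+1%:Z) = lcoef B k *~ (k%:Z - (lval B)%:Z).
Proof. exact: (lcoeff_nat (lderiv B) k). Qed.

Lemma lcoeff_lderiv_low B (k0 : nat) (n : int) :
  (forall j : nat, (j < k0)%N -> lcoef B j = 0) ->
  n < k0%:Z - (lval B).+1%:Z -> lcoeff (lderiv B) n = 0.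
Proof.
move=> h hn; case: (lcoeff_cases (lderiv B) n) => [[_ ->] //|[k [e ->]]].
by rewrite /= h ?mul0rz //; move: e hn => /= ->; lia.
Qed.

Lemma tr_lbrl (A : mpser C) X n : \tr (lcoeff (lbrl A X) n) = 0.
Proof.
case: (lcoeff_cases (lbrl A X) n) => [[_ ->]|[k [_ ->]]]; first exact: mxtrace0.
rewrite /= raddf_sum big1 // => i _.
by rewrite raddfB /= mxtrace_mulC subrr.
Qed.

End Ser.


Lemma tri_swap (V : zmodType) (K : nat) (h : nat -> nat -> V) :
  \sum_(i < K.+1) \sum_(a < (K - i).+1) h i a =
  \sum_(i < K.+1) \sum_(a < (K - i).+1) h a i.
Proof.
have E (g : nat -> nat -> V) : \sum_(i < K.+1) \sum_(a < (K - i).+1) g i a =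
    \sum_(i < K.+1) \sum_(a < K.+1) (if (i + a <= K)%N then g i a else 0 : V).
  apply: eq_bigr => i _; rewrite (big_ord_widen K.+1 (g i)); last by rewrite ltnS leq_subr.
  rewrite big_mkcond /=; apply: eq_bigr => a _.
  have -> : (a < (K - i).+1)%N = (i + a <= K)%N.
    move: (ltn_ord i) => hi; apply/idP/idP; lia.
  by [].
rewrite E (E (fun i a => h a i)) exchange_big /=; apply: eq_bigr => i _; apply: eq_bigr => a _.
by rewrite addnC.
Qed.

Lemma pair_id (F : comNzRingType) (A X : nat -> 'M[F]_2) (K : nat) :
  \sum_(i < K.+1) \tr ((\sum_(a < (K - i).+1)
        (A a *m X (K - i - a)%N - X (K - i - a)%N *m A a)) *m A i) = 0.
Proof.
pose g (i a : nat) := \tr (X (K - i - a)%N *m A a *m A i).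
rewrite (eq_bigr (fun i : 'I_K.+1 => \sum_(a < (K - i).+1) (g a i - g i a))); last first.
  move=> i _; rewrite mulmx_suml raddf_sum; apply: eq_bigr => a _.
  rewrite mulmxBl raddfB /= /g; congr (_ - _).
  have cyc (P Q S : 'M[F]_2) : \tr (P *m Q *m S) = \tr (Q *m S *m P).
    by rewrite -mulmxA mxtrace_mulC.
  by rewrite cyc subnAC.
rewrite (eq_bigr (fun i : 'I_K.+1 => \sum_(a < (K - i).+1) g a i - \sum_(a < (K - i).+1) g i a)); last first.
  by move=> i _; rewrite sumrB.
by rewrite sumrB -tri_swap subrr.
Qed.

Local Open Scope complex_scope.

Lemma lincomb' (F : comNzRingType) (x y u v : F) (k : F) : x - y = k * (u - v) -> u = v -> x = y.
Proof. by move=> h e; apply/eqP; rewrite -subr_eq0 h e subrr mulr0. Qed.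
Arguments lincomb' {F x y u v} k.

Theorem lemma4p1 (R : realType) (t d : pser R[i]) (A0 : mpser R[i]) :
  (* t^2 - 4d has a simple zero at z = 0 *)
  (smul t t 0%N - 4%:R * d 0%N = 0) ->
  (smul t t 1%N - 4%:R * d 1%N != 0) ->
  (* tr A0 = t, det A0 = d *)
  (forall k, mtrace A0 k = t k) ->
  (forall k, mdet A0 k = d k) ->
  regular_mpser A0 /\
  (forall B : mlaur R[i],
     leq_ (lbrr B A0) (of_mpser (fun _ => 0)) ->
     (exists (P : mpser R[i]) (X : mlaur R[i]),
         leq_ (lderiv B) (laddm (of_mpser P) (lbrl A0 X))) ->
     is_mpser B).
Proof.
move=> hD0 hD1 htr hdet.
set N := A0 0%N *+ 2 - (\tr (A0 0%N))%:M.
have eD0 : smul t t 0%N - 4%:R * d 0%N =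
    (A0 0%N ord0 ord0 - A0 0%N ord_max ord_max) ^+ 2
    + 4%:R * (A0 0%N ord0 ord_max * A0 0%N ord_max ord0).
  rewrite /smul !big_ord1 /= -!htr -!hdet /mdet /smul !big_ord1 /mentry /mtrace !tr2E /=; ring.
have eD1 : smul t t 1%N - 4%:R * d 1%N = 2 * \tr (N *m A0 1%N).
  rewrite /smul !sum2E /= -!htr -!hdet /mdet /smul !sum2E /mentry /mtrace /N !(mxE, sum2E, tr2E) /=; ring.
have hT : \tr (N *m A0 1%N) != 0.
  by apply: contraNneq hD1 => h0; rewrite eD1 h0 mulr0.
have hNN : N *m N = 0.
  rewrite eD0 in hD0.
  apply: mx2P; rewrite /N !(mxE, sum2E, tr2E) /=.
  - by rewrite -hD0; ring.
  - by ring.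
  - by ring.
  - by rewrite -hD0; ring.
split.
  rewrite /regular_mpser /regular_mx; apply: regular2.
  apply/negP => /is_scalar_mxP [c hc].
  move: hT; rewrite /N hc !(mxE, sum2E, tr2E) /=.
  by move=> /eqP; apply; ring.
move=> B hcomm [P [X hPX]].
apply: is_mpser_of.
case: (boolP [exists k : 'I_(lval B), lcoef B k != 0]) => hex; last first.
  move=> k hk; move: hex; rewrite negb_exists => /forallP /(_ (Ordinal hk)) /negPn /eqP //.
exfalso.
have hex' : exists k, ((k < lval B)%N && (lcoef B k != 0)).
  by case/existsP: hex => k hk; exists k; rewrite ltn_ord hk.
case: (ex_minnP hex') => k0 /andP [hk0 hb] hmin.
have hlow : forall j, (j < k0)%N -> lcoef B j = 0.
  move=> j hj; case: (eqVneq (lcoef B j) 0) => // hj'.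
  by have := hmin j; rewrite hj' andbT => /(_ (ltn_trans hj hk0)); lia.
have hR k : \sum_(i < k.+1) (lcoef B (k - i)%N *m A0 i - A0 i *m lcoef B (k - i)%N) = 0.
  have e := lcoeff_nat _ (lbrr B A0) k.
  have e2 := hcomm (k%:Z - (lval (lbrr B A0))%:Z).
  by rewrite e lcoeff_zero in e2.
have hC0 : lcoef B k0 *m A0 0%N = A0 0%N *m lcoef B k0.
  move: (hR k0); rewrite big_ord_recl big1 ?addr0 ?subn0.
    by move/eqP; rewrite subr_eq0 => /eqP.
  move=> i _; rewrite /= hlow ?mul0mx ?mulmx0 ?subrr //.
  by rewrite /bump leq0n add1n; move: (ltn_ord i); lia.
have hC1 : lcoef B k0.+1 *m A0 0%N - A0 0%N *m lcoef B k0.+1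
     + (lcoef B k0 *m A0 1%N - A0 1%N *m lcoef B k0) = 0.
  move: (hR k0.+1); rewrite big_ord_recl big_ord_recl big1 ?addr0 ?subn0 /=; first by rewrite /bump leq0n add1n subSS subn0.
  move=> i _; rewrite /= hlow ?mul0mx ?mulmx0 ?subrr //.
  by rewrite /bump !leq0n !add1n; move: (ltn_ord i); lia.
have hD (n : int) : n < 0 -> lcoeff (lderiv B) n = lcoeff (lbrl A0 X) n.
  move=> hn; rewrite hPX lcoeff_laddm lcoeffE ifF ?add0r //=; lia.
have htrL (n : int) : \tr (lcoeff (lbrl A0 X) n) = 0 := tr_lbrl _ A0 X n.
have hvz : (k0%:Z - (lval B)%:Z != 0) by lia.
have htb : \tr (lcoef B k0) = 0.
  have := hD (k0%:Z - (lval B).+1%:Z) ltac:(lia).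
  rewrite lcoeff_lderiv_nat => /(congr1 mxtrace); rewrite htrL raddfMz /=.
  by move/eqP; rewrite mulrz_eq0 (negbTE hvz) /= => /eqP.
pose s : R[i] := (k0%:Z - (lval B)%:Z)%:~R.
have es1 : ((k0.+1)%:Z - (lval B)%:Z)%:~R = s + 1 :> R[i].
  by rewrite /s -[1 in RHS]/(1%:~R) -intrD; congr (_%:~R); lia.
have htb1 : \tr (lcoef B k0.+1) * (s + 1) = 0.
  have := hD (k0.+1%:Z - (lval B).+1%:Z) ltac:(lia).
  rewrite lcoeff_lderiv_nat => /(congr1 mxtrace); rewrite htrL raddfMz /=.
  by rewrite -mulrzr es1.
have hw : ((lval B).+1 <= k0 + lval X)%N.
  rewrite leqNgt; apply/negP => hlt.
  have := hD (k0%:Z - (lval B).+1%:Z) ltac:(lia).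
  rewrite lcoeff_lderiv_nat lcoeff_neg; last by rewrite /=; lia.
  move/eqP; rewrite -scaler_int scaler_eq0 intr_eq0 (negbTE hvz) /=.
  by rewrite (negbTE hb).
have [K1 hK1] : exists K1, K1 = (k0 + lval X - (lval B).+1)%N by eexists.
have hP := pair_id _ A0 (lcoef X) K1.+1.
have hP' : \sum_(i < K1.+2) \tr (lcoef (lbrl A0 X) (K1.+1 - i)%N *m A0 i) = 0 := hP.
have hP2 : \sum_(i < K1.+2)
    \tr (lcoeff (lderiv B) ((K1.+1 - i)%N%:Z - (lval X)%:Z) *m A0 i) = 0.
  rewrite -[RHS]hP'; apply: eq_bigr => i _.
  rewrite hD; last by move: (ltn_ord i); lia.
  by rewrite (lcoeff_nat _ (lbrl A0 X)).
rewrite big_ord_recl big_ord_recl big1 ?addr0 /= in hP2; last first.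
  move=> i _; rewrite (lcoeff_lderiv_low _ B k0) ?mul0mx ?mxtrace0 //.
  by rewrite /bump !leq0n !add1n; move: (ltn_ord i); lia.
move: hP2.
have -> : ((K1.+1 - 0)%N%:Z - (lval X)%:Z) = k0.+1%:Z - (lval B).+1%:Z by lia.
have -> : ((K1.+1 - bump 0 0)%N%:Z - (lval X)%:Z) = k0%:Z - (lval B).+1%:Z.
  by rewrite /bump leq0n add1n; lia.
rewrite !lcoeff_lderiv_nat => hP2.
have hpair : \tr (lcoef B k0.+1 *m A0 0%N) * (s + 1) + \tr (lcoef B k0 *m A0 1%N) * s = 0.
  have trzE (M Q : 'M[R[i]]_2) (z : int) : \tr ((M *~ z) *m Q) = \tr (M *m Q) * z%:~R.
    by rewrite -scaler_int -scalemxAl mxtraceZ mulrC.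
  rewrite -[RHS]hP2 !trzE es1 /s /bump leq0n add1n; ring.
have h2s : s *+ 2 + 1 != 0.
  rewrite /s; have -> : ((k0%:Z - (lval B)%:Z)%:~R *+ 2 + 1 : R[i]) =
      (((k0%:Z - (lval B)%:Z) *+ 2 + 1)%:~R) by rewrite !mulr2n !intrD.
  by rewrite intr_eq0; apply/eqP; lia.
have := key _ (A0 0%N) (A0 1%N) (lcoef B k0) (lcoef B k0.+1) N s erefl hT hNN hC0 hC1
   htb htb1 hpair h2s.
by move/eqP; rewrite (negbTE hb).
Qed.
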